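(* For all integers $n\ge0$ and $d\ge1$ there is an $(n+1)\times(n+1)$ real matrix $M$, with rows and columns indexed by $\{0,1,\dots,n\}$, such that $\gamma_2(M)\le d$ and $M_{st}=s-t$ for all $s,t\in\{0,\dots,n\}$ with $|s-t|\le d$.
   Context: For a real matrix $A$, $\gamma_2(A)=\min\{c(X)c(Y): X^{\mathsf T}Y=A\}$, where $c(X)$ denotes the maximum Euclidean norm of a column of $X$. *)

(* Defs.v *)
From HB Require Import structures.
From mathcomp Require Import all_boot all_order all_algebra.
From mathcomp Require Import all_classical all_reals.
Set Implicit Arguments. Unset Strict Implicit. Unset Printing Implicit Defensive.
Import Order.TTheory GRing.Theory Num.Theory.
Local Open Scope ring_scope.
Local Open Scope classical_set_scope.

(* c(X): maximum Euclidean norm of a column of X : 'M_(k, m). (0 if m = 0.) *)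
Definition colnorm_max (R : realType) (k m : nat) (X : 'M[R]_(k, m)) : R :=
  \big[Num.max/0]_(j < m) Num.sqrt (\sum_(i < k) X i j ^+ 2).

Definition gamma2_values (R : realType) (m n : nat) (A : 'M[R]_(m, n)) : set R :=
  [set r | exists k (X : 'M[R]_(k, m)) (Y : 'M[R]_(k, n)),
             X^T *m Y = A /\ r = colnorm_max X * colnorm_max Y].

(* gamma_2(A) = min (here: inf, the minimum is attained) of that set. *)
Definition gamma2 (R : realType) (m n : nat) (A : 'M[R]_(m, n)) : R :=
  inf (gamma2_values A).

(* Main.v *)
Require Import Defs.
From HB Require Import structures.
From mathcomp Require Import all_boot all_order all_algebra.
From mathcomp Require Import all_classical all_reals.
From mathcomp Require Import zify ring lra.
Import Order.TTheory GRing.Theory Num.Theory.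
Local Open Scope ring_scope.

Definition sqb (d m : nat) : bool := (m %% (4 * d) < 2 * d)%N.
Definition sg (R : realType) (d m : nat) : R := if sqb d m then 1 else -1.

Lemma sqb_lt d m : (m < 4 * d)%N -> sqb d m = (m < 2 * d)%N.
Proof. by move=> h; rewrite /sqb modn_small. Qed.

Lemma sqb_ge d m : (4 * d <= m < 8 * d)%N -> sqb d m = (m - 4 * d < 2 * d)%N.
Proof.
move=> /andP[h1 h2]; rewrite /sqb -{1}(subnK h1) modnDr modn_small //; lia.
Qed.

Lemma sg_per (R : realType) d m : sg R d (m + 4 * d) = sg R d m.
Proof. by rewrite /sg /sqb modnDr. Qed.

Lemma sum_shift (R : realType) (N : nat) (f : nat -> R) :
  (forall m, f (m + N)%N = f m) ->
  forall a, \sum_(j < N) f (a + j)%N = \sum_(j < N) f j.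
Proof.
move=> hf; elim=> [|a IH]; first by [].
rewrite -IH.
have e : f a + \sum_(i < N) f (a.+1 + i)%N = \sum_(i < N) f (a + i)%N + f (a + N)%N.
  rewrite -(big_ord_recr N (fun j : 'I_N.+1 => f (a + j)%N)).
  rewrite (big_ord_recl N (fun j : 'I_N.+1 => f (a + j)%N)) /= addn0.
  by congr (_ + _); apply: eq_bigr => i _; congr f; rewrite /bump /=; lia.
rewrite hf in e.
by apply: (addrI (f a)); rewrite e addrC.
Qed.

Lemma sgA (R : realType) d m : (m < 2 * d)%N -> sg R d m = 1.
Proof. by move=> h; rewrite /sg sqb_lt ?h //; lia. Qed.
Lemma sgB (R : realType) d m : (2 * d <= m < 4 * d)%N -> sg R d m = -1.
Proof. by move=> h; rewrite /sg sqb_lt; [rewrite (_ : (m < 2 * d)%N = false) //|]; lia. Qed.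
Lemma sgC (R : realType) d m : (4 * d <= m < 6 * d)%N -> sg R d m = 1.
Proof. by move=> h; rewrite /sg sqb_ge; [rewrite (_ : (m - 4 * d < 2 * d)%N = true) //|]; lia. Qed.
Lemma sgD (R : realType) d m : (6 * d <= m < 8 * d)%N -> sg R d m = -1.
Proof. by move=> h; rewrite /sg sqb_ge; [rewrite (_ : (m - 4 * d < 2 * d)%N = false) //|]; lia. Qed.

Lemma count_T (R : realType) d q : (q <= 2 * d)%N ->
  \sum_(j < 4 * d) sg R d j * sg R d (j + (2 * d + q)) = 4 * q%:R - 4 * d%:R.
Proof.
move=> hq.
rewrite -(big_mkord xpredT (fun j => sg R d j * sg R d (j + (2 * d + q)))).
rewrite (@big_cat_nat _ _ _ (2 * d - q)) //=; last lia.
rewrite (@big_cat_nat _ _ _ (2 * d) (2 * d - q)) //=; [|lia|lia].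
rewrite (@big_cat_nat _ _ _ (4 * d - q) (2 * d)) //=; [|lia|lia].
rewrite (eq_big_nat _ _ (F2 := fun=> -1)); last first.
  by move=> i /andP[h1 h2]; rewrite sgA ?sgB ?mul1r //; lia.
rewrite [\sum_(2 * d - q <= i < 2 * d) _](eq_big_nat _ _ (F2 := fun=> 1)); last first.
  by move=> i /andP[h1 h2]; rewrite sgA ?sgC ?mul1r //; lia.
rewrite [\sum_(2 * d <= i < 4 * d - q) _](eq_big_nat _ _ (F2 := fun=> -1)); last first.
  by move=> i /andP[h1 h2]; rewrite sgB ?sgC ?mulr1 //; lia.
rewrite [\sum_(4 * d - q <= i < 4 * d) _](eq_big_nat _ _ (F2 := fun=> 1)); last first.
  by move=> i /andP[h1 h2]; rewrite sgB ?sgD ?mulrNN ?mulr1 //; lia.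
rewrite !sumr_const_nat.
have -> : (2 * d - q - 0 = 2 * d - q)%N by lia.
have -> : (2 * d - (2 * d - q) = q)%N by lia.
have -> : (4 * d - q - 2 * d = 2 * d - q)%N by lia.
have -> : (4 * d - (4 * d - q) = q)%N by lia.
rewrite mulNrn natrB; last lia.
rewrite natrM; lra.
Qed.

Lemma sg_sq (R : realType) d m : sg R d m ^+ 2 = 1.
Proof. by rewrite /sg; case: sqb; rewrite ?sqrrN expr1n. Qed.

Lemma colnorm_ge0 (R : realType) k m (X : 'M[R]_(k, m)) : 0 <= colnorm_max X.
Proof.
rewrite /colnorm_max; elim/big_ind: _ => //.
  by move=> x y hx hy; rewrite le_max hx.
by move=> i _; apply: sqrtr_ge0.
Qed.

Lemma colnorm_le (R : realType) k m (X : 'M[R]_(k, m)) c :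
  (forall j, \sum_(i < k) X i j ^+ 2 = c) -> colnorm_max X <= Num.sqrt c.
Proof.
move=> h; rewrite /colnorm_max; apply: bigmax_le; first exact: sqrtr_ge0.
by move=> j _; rewrite h.
Qed.

Theorem lemma4p18 (R : realType) (n d : nat) (hd : (1 <= d)%N) :
  exists M : 'M[R]_(n.+1, n.+1),
    gamma2 M <= d%:R /\
    forall s t : 'I_(n.+1),
      (`|(s%:Z - t%:Z)%R| <= d%:Z)%R -> M s t = s%:R - t%:R.
Proof.
pose X : 'M[R]_(4 * d, n.+1) := \matrix_(j, s) sg R d (s + j).
pose Y : 'M[R]_(4 * d, n.+1) := \matrix_(j, t) (- 4^-1 * sg R d (t + 3 * d + j)).
exists (X^T *m Y); split.
  apply: (@le_trans _ _ (colnorm_max X * colnorm_max Y)).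
    apply: ge_inf.
      exists 0 => r [k [X' [Y' [_ ->]]]].
      by apply: mulr_ge0; apply: colnorm_ge0.
    by exists (4 * d)%N, X, Y.
  have hX : colnorm_max X <= Num.sqrt (4 * d%:R).
    apply: colnorm_le => j.
    under eq_bigr do rewrite mxE sg_sq.
    by rewrite sumr_const card_ord natrM.
  have hY : colnorm_max Y <= Num.sqrt (4 * d%:R * 4^-1 ^+ 2).
    apply: colnorm_le => j.
    under eq_bigr do rewrite mxE exprMn sg_sq mulr1 sqrrN.
    by rewrite sumr_const card_ord -[_ *+ (4 * d)]mulr_natr natrM mulrC.
  apply: (le_trans (ler_pM (colnorm_ge0 _ _ _ X) (colnorm_ge0 _ _ _ Y) hX hY)).
  rewrite -sqrtrM; last by rewrite mulr_ge0 // ler0n.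
  have -> : 4 * d%:R * (4 * d%:R * 4^-1 ^+ 2) = (d%:R : R) ^+ 2 by field.
  by rewrite sqrtr_sqr ger0_norm.
move=> s t; rewrite ler_norml => /andP[h1 h2].
have hs : (s <= t + d)%N by lia.
have ht : (t <= s + d)%N by lia.
set q := (t + d - s)%N.
have hq : (q <= 2 * d)%N by lia.
rewrite !mxE.
have -> : \sum_j X^T s j * Y j t =
   - 4^-1 * \sum_(j < 4 * d) (fun m => sg R d m * sg R d (m + (2 * d + q))) (s + j)%N.
  rewrite mulr_sumr; apply: eq_bigr => j _; rewrite !mxE.
  rewrite mulrCA; congr (_ * (_ * sg R d _)); rewrite /q; lia.
rewrite (@sum_shift R (4 * d) (fun m => sg R d m * sg R d (m + (2 * d + q)))); last first.
  by move=> m; rewrite /= sg_per (_ : (m + 4 * d + (2 * d + q) = (m + (2 * d + q)) + 4 * d)%N) ?sg_per //; lia.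
rewrite count_T // /q natrB // natrD.
by field.
Qed.
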